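(* Let $g$ be a probability density on $\mathbb{R}$ which is unimodal, symmetric about $0$, logconcave and positive on $\mathbb{R}$, and let $h=-\ln g$. If $h'$ is unbounded (i.e. $h'(x)\to\infty$ as $x\to\infty$), then for every $y>0$, $\lim_{x\to-\infty}\frac{\bar G(y-x)}{\bar G(-x)}=0$, and consequently the upper endpoint $u(x)$ of the HPD credible interval satisfies $u(x)\to0$ as $x\to-\infty$ (i.e. $a=0$).
   Context: $G$ is the cdf of $g$, $\bar G=1-G$, $G^{-1}$ its quantile function. For $X$ with density $g(x-\theta)$, $\theta\ge0$, and $\alpha\in(0,1)$, with $d_0=G^{-1}(\tfrac1{1+\alpha})$, the $100(1-\alpha)\%$ HPD Bayesian credible interval under the prior $1_{[0,\infty)}(\theta)$ has upper endpoint $u(x)=x-G^{-1}(\alpha G(x))$ for $x\le d_0$ and $u(x)=x+G^{-1}(\tfrac12+\tfrac{1-\alpha}2G(x))$ for $x>d_0$; $a=\lim_{x\to-\infty}u(x)$. The posterior of $\theta$ given $x$ has density $g(\theta-x)1_{[0,\infty)}(\theta)/G(x)$, so $P(\theta\ge y\mid x)=\bar G(y-x)/\bar G(-x)$ for $y\ge0$. *)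

(* Defs.v *)
From Stdlib Require Import Reals Lra ClassicalEpsilon.
Open Scope R_scope.

Definition lim_minfty (f : R -> R) (l : R) : Prop :=
  forall eps, 0 < eps -> exists X, forall x, x <= X -> Rabs (f x - l) < eps.

Definition lim_pinfty (f : R -> R) (l : R) : Prop :=
  forall eps, 0 < eps -> exists X, forall x, X <= x -> Rabs (f x - l) < eps.

Definition tends_pinfty (f : R -> R) : Prop :=
  forall M, exists X, forall x, X <= x -> M <= f x.

(* quantile function G^{-1}(p): a point q with G q = p (unique when G is a
   continuous strictly increasing cdf and 0 < p < 1). *)
Definition quantile (G : R -> R) (p : R) : R :=
  epsilon (inhabits 0) (fun q => G q = p).

Definition hpd_upper (G : R -> R) (alpha x : R) : R :=
  let d0 := quantile G (1 / (1 + alpha)) in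
  if Rle_dec x d0 then x - quantile G (alpha * G x)
  else x + quantile G (1/2 + (1 - alpha) / 2 * G x).

(* Main.v *)
Require Import Defs.
From Stdlib Require Import Reals Lra ClassicalEpsilon.
Open Scope R_scope.
Lemma dshift (G g : R -> R) (y z : R) :
  derivable_pt_lim G (z + y) (g (z + y)) ->
  derivable_pt_lim (fun t => G (t + y)) z (g (z + y)).
Proof.
  intros H eps Heps. destruct (H eps Heps) as [d Hd]. exists d.
  intros h Hh Hd'. replace (z + h + y) with (z + y + h) by ring. now apply Hd.
Qed.

Lemma dneg (G g : R -> R) (z : R) :
  derivable_pt_lim G (- z) (g (- z)) ->
  derivable_pt_lim (fun t => G (- t)) z (- g (- z)).
Proof.
  intros H eps Heps. destruct (H eps Heps) as [d Hd]. exists d.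
  intros h Hh Hd'.
  assert (Hh' : - h <> 0) by lra.
  assert (Ha : Rabs (- h) < d) by (rewrite Rabs_Ropp; exact Hd').
  specialize (Hd (- h) Hh' Ha).
  replace (- (z + h)) with (- z + - h) by ring.
  replace ((G (- z + - h) - G (- z)) / h - - g (- z))
    with (- ((G (- z + - h) - G (- z)) / - h - g (- z))) by (field; lra).
  now rewrite Rabs_Ropp.
Qed.

Lemma dF (G g : R -> R) (y c z : R) :
  (forall x, derivable_pt_lim G x (g x)) ->
  derivable_pt_lim (fun t => (1 - G (t + y)) - c * (1 - G t)) z
     (- g (z + y) + c * g z).
Proof.
  intros HG.
  replace (- g (z + y) + c * g z) with ((0 - g (z+y)) - c * (0 - g z)) by ring.
  apply (derivable_pt_lim_minus (fun t => 1 - G (t + y)) (fun t => c * (1 - G t))).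
  - apply (derivable_pt_lim_minus (fun _ => 1) (fun t => G (t + y))).
    + apply derivable_pt_lim_const.
    + apply dshift, HG.
  - apply (derivable_pt_lim_scal (fun t => 1 - G t)).
    apply (derivable_pt_lim_minus (fun _ => 1) G).
    + apply derivable_pt_lim_const.
    + apply HG.
Qed.

Lemma exp_le (a b : R) : a <= b -> exp a <= exp b.
Proof. intros [H|H]; [left; now apply exp_increasing | right; now subst]. Qed.

Lemma G_incr (g G : R -> R) :
  (forall x, 0 < g x) -> (forall x, derivable_pt_lim G x (g x)) ->
  forall a b, a < b -> G a < G b.
Proof.
  intros gp HG a b Hab.
  destruct (MVT_cor2 G g a b Hab) as [c [Hc _]]. { intros; apply HG. }
  assert (0 < g c * (b - a)) by (apply Rmult_lt_0_compat; [apply gp | lra]). lra.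
Qed.

Lemma G_le (g G : R -> R) :
  (forall x, 0 < g x) -> (forall x, derivable_pt_lim G x (g x)) ->
  forall a b, a <= b -> G a <= G b.
Proof.
  intros gp HG a b [H|H]; [left; eapply G_incr; eauto | right; now subst].
Qed.

Lemma G_lt1 (g G : R -> R) :
  (forall x, 0 < g x) -> (forall x, derivable_pt_lim G x (g x)) ->
  lim_pinfty G 1 -> forall a, G a < 1.
Proof.
  intros gp HG Hl.
  assert (Hle : forall b, G b <= 1).
  { intros b. destruct (Rle_or_lt (G b) 1) as [H|H]; auto.
    destruct (Hl (G b - 1)) as [X HX]; [lra|].
    specialize (HX (Rmax X b) (Rmax_l _ _)).
    assert (G b <= G (Rmax X b)) by (eapply G_le; eauto; apply Rmax_r).
    apply Rabs_def2 in HX. lra. }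
  intros a. apply Rlt_le_trans with (G (a + 1)); [eapply G_incr; eauto; lra | apply Hle].
Qed.

Lemma G_gt0 (g G : R -> R) :
  (forall x, 0 < g x) -> (forall x, derivable_pt_lim G x (g x)) ->
  lim_minfty G 0 -> forall a, 0 < G a.
Proof.
  intros gp HG Hl.
  assert (Hle : forall b, 0 <= G b).
  { intros b. destruct (Rle_or_lt 0 (G b)) as [H|H]; auto.
    destruct (Hl (- G b)) as [X HX]; [lra|].
    specialize (HX (Rmin X b) (Rmin_l _ _)).
    assert (G (Rmin X b) <= G b) by (eapply G_le; eauto; apply Rmin_r).
    apply Rabs_def2 in HX. lra. }
  intros a. apply Rle_lt_trans with (G (a - 1)); [apply Hle | eapply G_incr; eauto; lra].
Qed.

Lemma G_sym (g G : R -> R) :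
  (forall x, derivable_pt_lim G x (g x)) ->
  lim_minfty G 0 -> lim_pinfty G 1 -> (forall x, g (- x) = g x) ->
  forall z, G z + G (- z) = 1.
Proof.
  intros HG Hm Hp gs.
  set (K := fun z => G z + G (- z)).
  assert (HK : forall z, derivable_pt_lim K z 0).
  { intros z. replace 0 with (g z + - g (- z)) by (rewrite gs; ring).
    apply (derivable_pt_lim_plus G (fun t => G (- t))). apply HG.
    apply dneg, HG. }
  assert (Kc : forall z, K z = K 0).
  { intros z. destruct (Rtotal_order z 0) as [H|[H|H]].
    - destruct (MVT_cor2 K (fun _ => 0) z 0 H) as [c [Hc _]]; [intros; apply HK|]. lra.
    - now subst.
    - destruct (MVT_cor2 K (fun _ => 0) 0 z H) as [c [Hc _]]; [intros; apply HK|]. lra. }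
  assert (K0 : K 0 = 1).
  { destruct (Req_dec (K 0) 1) as [E|E]; auto. exfalso.
    assert (Hd : 0 < Rabs (K 0 - 1) / 2) by (apply Rdiv_lt_0_compat; [apply Rabs_pos_lt; lra | lra]).
    destruct (Hp _ Hd) as [X1 H1]. destruct (Hm _ Hd) as [X2 H2].
    set (z := Rmax X1 (- X2)).
    specialize (H1 z (Rmax_l _ _)). specialize (H2 (- z)).
    assert (- z <= X2) by (assert (- X2 <= z) by apply Rmax_r; lra).
    specialize (H2 H).
    rewrite <- (Kc z) in E, Hd, H1, H2. unfold K in *.
    assert (Rabs (G z + G (- z) - 1) <= Rabs (G z - 1) + Rabs (G (- z) - 0)).
    { replace (G z + G (- z) - 1) with ((G z - 1) + (G (- z) - 0)) by ring. apply Rabs_triang. }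
    lra. }
  intros z. rewrite <- K0. apply Kc.
Qed.

Lemma tangent (g h' : R -> R) :
  (forall x y t, 0 <= t <= 1 ->
     - ln (g (t * x + (1 - t) * y)) <= t * (- ln (g x)) + (1 - t) * (- ln (g y))) ->
  (forall x, derivable_pt_lim (fun z => - ln (g z)) x (h' x)) ->
  forall s y, 0 < y -> h' s * y <= - ln (g (s + y)) - - ln (g s).
Proof.
  intros cv hd s y Hy.
  set (H := fun z => - ln (g z)).
  change (h' s * y <= H (s + y) - H s).
  set (D := (H (s + y) - H s) / y).
  destruct (Rle_or_lt (h' s) D) as [Hl|Hl].
  - unfold D in Hl. apply Rmult_le_compat_r with (r := y) in Hl; [|lra].
    replace ((H (s + y) - H s) / y * y) with (H (s + y) - H s) in Hl by (field; lra). exact Hl.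
  - exfalso. destruct (hd s (h' s - D)) as [d Hd]; [lra|].
    set (t := Rmin 1 (d / (2 * y))).
    assert (dp := cond_pos d).
    assert (t0 : 0 < t) by (apply Rmin_glb_lt; [lra| apply Rdiv_lt_0_compat; lra]).
    assert (t1 : t <= 1) by apply Rmin_l.
    assert (t2 : t <= d / (2 * y)) by apply Rmin_r.
    set (hh := t * y).
    assert (hp : 0 < hh) by (apply Rmult_lt_0_compat; lra).
    assert (hd' : hh < d).
    { unfold hh. apply Rle_lt_trans with (d / (2 * y) * y).
      apply Rmult_le_compat_r; lra.
      replace (d / (2 * y) * y) with (d / 2) by (field; lra). lra. }
    specialize (Hd hh ltac:(lra) ltac:(rewrite Rabs_pos_eq; lra)).
    apply Rabs_def2 in Hd. destruct Hd as [_ Hd].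
    specialize (cv (s + y) s t (conj (Rlt_le _ _ t0) t1)).
    replace (t * (s + y) + (1 - t) * s) with (s + hh) in cv by (unfold hh; ring).
    change (H (s + hh) <= t * H (s + y) + (1 - t) * H s) in cv.
    assert (E : (H (s + hh) - H s) / hh <= D).
    { unfold D. replace ((H (s + y) - H s) / y) with ((t * (H (s + y) - H s)) / hh) by (unfold hh; field; lra).
      unfold Rdiv. apply Rmult_le_compat_r. left; apply Rinv_0_lt_compat; lra. lra. }
    change (- (h' s - D) < (H (s + hh) - H s) / hh - h' s) in Hd. lra.
Qed.

Lemma gbound (g h' : R -> R) :
  (forall x, 0 < g x) ->
  (forall x y t, 0 <= t <= 1 ->
     - ln (g (t * x + (1 - t) * y)) <= t * (- ln (g x)) + (1 - t) * (- ln (g y))) ->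
  (forall x, derivable_pt_lim (fun z => - ln (g z)) x (h' x)) ->
  forall s y M, 0 < y -> M <= h' s -> g (s + y) <= g s * exp (- (M * y)).
Proof.
  intros gp cv hd s y M Hy HM.
  pose proof (tangent g h' cv hd s y Hy) as T.
  assert (M * y <= h' s * y) by (apply Rmult_le_compat_r; lra).
  rewrite <- (exp_ln (g (s + y))) by apply gp.
  rewrite <- (exp_ln (g s)) by apply gp.
  rewrite <- exp_plus. apply exp_le. lra.
Qed.

Lemma tail (g G : R -> R) :
  (forall x, derivable_pt_lim G x (g x)) -> lim_pinfty G 1 ->
  forall y c T, 0 <= y -> 0 <= c -> (forall s, T <= s -> g (s + y) <= c * g s) ->
  forall t, T <= t -> 1 - G (t + y) <= c * (1 - G t).
Proof.
  intros HG Hp y c T Hy Hc Hb t0 Ht0.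
  set (F := fun t => (1 - G (t + y)) - c * (1 - G t)).
  destruct (Rle_or_lt (F t0) 0) as [H|H]; [unfold F in H; lra|]. exfalso.
  destruct (Hp (F t0 / (1 + c))) as [X HX]; [apply Rdiv_lt_0_compat; lra|].
  set (t1 := Rmax X t0 + 1).
  assert (lt01 : t0 < t1) by (unfold t1; pose proof (Rmax_r X t0); lra).
  assert (Xt1 : X <= t1) by (unfold t1; pose proof (Rmax_l X t0); lra).
  assert (Mon : F t0 <= F t1).
  { destruct (MVT_cor2 F (fun z => - g (z + y) + c * g z) t0 t1 lt01) as [k [Hk Hk2]].
    { intros; apply dF, HG. }
    assert (- g (k + y) + c * g k >= 0) by (pose proof (Hb k ltac:(lra)); lra).
    assert (0 <= (- g (k + y) + c * g k) * (t1 - t0)) by (apply Rmult_le_pos; lra). lra. }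
  pose proof (HX t1 Xt1) as A1. pose proof (HX (t1 + y) ltac:(lra)) as A2.
  apply Rabs_def2 in A1. apply Rabs_def2 in A2.
  assert (c * (G t1 - 1) <= c * (F t0 / (1 + c))) as Hc2.
  { apply Rmult_le_compat_l; lra. }
  assert (F t0 = F t0 / (1 + c) + c * (F t0 / (1 + c))) by (field; lra).
  unfold F at 2 in Mon. lra.
Qed.

Lemma quant_spec (g G : R -> R) :
  (forall x, derivable_pt_lim G x (g x)) -> lim_minfty G 0 -> lim_pinfty G 1 ->
  forall p, 0 < p < 1 -> G (quantile G p) = p.
Proof.
  intros HG Hm Hp p Hp01. unfold quantile. apply epsilon_spec.
  destruct (Hm p) as [X1 H1]; [lra|]. destruct (Hp (1 - p)) as [X2 H2]; [lra|].
  set (a := Rmin X1 (X2 - 1)).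
  assert (ha : G a < p) by (specialize (H1 a (Rmin_l _ _)); apply Rabs_def2 in H1; lra).
  assert (hb : p < G X2) by (specialize (H2 X2 (Rle_refl _)); apply Rabs_def2 in H2; lra).
  assert (a < X2) by (unfold a; pose proof (Rmin_r X1 (X2 - 1)); lra).
  assert (Hc : continuity (fun z => G z - p)).
  { intros z. apply derivable_continuous_pt. exists (g z - 0).
    apply (derivable_pt_lim_minus G (fun _ => p)); [apply HG | apply derivable_pt_lim_const]. }
  destruct (IVT _ a X2 Hc H ltac:(lra) ltac:(lra)) as [z [_ Hz]].
  exists z. lra.
Qed.

Theorem mainTheorem15
  (g G h' : R -> R)
  (* g positive on R *)
  (g_pos : forall x, 0 < g x)
  (* G is the cdf of g: G' = g, G(-oo) = 0, G(+oo) = 1 (so g is a probability density) *)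
  (G_deriv : forall x, derivable_pt_lim G x (g x))
  (G_minf : lim_minfty G 0)
  (G_pinf : lim_pinfty G 1)
  (* symmetric about 0 *)
  (g_sym : forall x, g (- x) = g x)
  (* unimodal (mode 0) *)
  (g_unimodal : forall x y, 0 <= x -> x <= y -> g y <= g x)
  (* logconcave: h = - ln g convex *)
  (g_logconcave : forall x y t, 0 <= t <= 1 ->
     - ln (g (t * x + (1 - t) * y)) <= t * (- ln (g x)) + (1 - t) * (- ln (g y)))
  (* h' is the derivative of h = - ln g *)
  (h_deriv : forall x, derivable_pt_lim (fun z => - ln (g z)) x (h' x))
  (* h' unbounded: h'(x) -> +oo as x -> +oo *)
  (h'_unbounded : tends_pinfty h') :
  (forall y, 0 < y ->
     lim_minfty (fun x => (1 - G (y - x)) / (1 - G (- x))) 0) /\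
  (forall alpha, 0 < alpha < 1 -> lim_minfty (fun x => hpd_upper G alpha x) 0).
Proof.
  assert (lt1 := G_lt1 g G g_pos G_deriv G_pinf).
  assert (gt0 := G_gt0 g G g_pos G_deriv G_minf).
  assert (P1 : forall y, 0 < y ->
     lim_minfty (fun x => (1 - G (y - x)) / (1 - G (- x))) 0).
  { intros y Hy eps Heps.
    set (M := - ln (eps / 2) / y).
    destruct (h'_unbounded M) as [X HX].
    assert (Hb : forall s, X <= s -> g (s + y) <= eps / 2 * g s).
    { intros s Hs. eapply Rle_trans.
      apply (gbound g h' g_pos g_logconcave h_deriv s y M Hy (HX s Hs)).
      replace (- (M * y)) with (ln (eps / 2)) by (unfold M; field; lra).
      rewrite exp_ln by lra. lra. }
    exists (- X). intros x Hx.
    pose proof (tail g G G_deriv G_pinf y (eps / 2) X ltac:(lra) ltac:(lra) Hb (- x) ltac:(lra)) as Ht.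
    replace (y - x) with (- x + y) by ring.
    pose proof (lt1 (- x + y)). pose proof (lt1 (- x)).
    rewrite Rminus_0_r. rewrite Rabs_pos_eq.
    - apply Rle_lt_trans with (eps / 2); [|lra].
      apply (Rmult_le_reg_r (1 - G (- x))); [lra|].
      replace ((1 - G (- x + y)) / (1 - G (- x)) * (1 - G (- x))) with (1 - G (- x + y)) by (field; lra).
      exact Ht.
    - left. apply Rdiv_lt_0_compat; lra. }
  split; [exact P1|].
  intros alpha Ha eps Heps.
  destruct (P1 eps Heps alpha ltac:(lra)) as [X1 HX1].
  set (d0 := quantile G (1 / (1 + alpha))).
  exists (Rmin X1 d0). intros x Hx.
  assert (x <= X1) by (pose proof (Rmin_l X1 d0); lra).
  assert (x <= d0) by (pose proof (Rmin_r X1 d0); lra).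
  unfold hpd_upper. fold d0.
  destruct (Rle_dec x d0) as [_|C]; [|lra].
  pose proof (gt0 x). pose proof (lt1 x).
  assert (Hq : G (quantile G (alpha * G x)) = alpha * G x).
  { apply (quant_spec g G G_deriv G_minf G_pinf).
    split; [apply Rmult_lt_0_compat; lra|].
    apply Rle_lt_trans with (1 * G x); [apply Rmult_le_compat_r; lra | lra]. }
  set (q := quantile G (alpha * G x)) in *.
  assert (q < x).
  { destruct (Rlt_or_le q x) as [L|L]; auto.
    pose proof (G_le g G g_pos G_deriv x q L).
    assert (alpha * G x < 1 * G x) by (apply Rmult_lt_compat_r; lra). lra. }
  assert (x - eps < q).
  { destruct (Rlt_or_le (x - eps) q) as [L|L]; auto. exfalso.
    pose proof (G_le g G g_pos G_deriv q (x - eps) L).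
    pose proof (G_sym g G G_deriv G_minf G_pinf g_sym x) as S1.
    pose proof (G_sym g G G_deriv G_minf G_pinf g_sym (x - eps)) as S2.
    replace (- (x - eps)) with (eps - x) in S2 by ring.
    specialize (HX1 x H).
    rewrite Rminus_0_r in HX1.
    pose proof (lt1 (- x)).
    assert (R1 : alpha * (1 - G (- x)) <= 1 - G (eps - x)) by (replace (1 - G (- x)) with (G x) by lra; replace (1 - G (eps - x)) with (G (x - eps)) by lra; lra).
    assert (R2 : alpha <= (1 - G (eps - x)) / (1 - G (- x))).
    { apply (Rmult_le_reg_r (1 - G (- x))); [lra|].
      replace ((1 - G (eps - x)) / (1 - G (- x)) * (1 - G (- x))) with (1 - G (eps - x)) by (field; lra).
      exact R1. }
    pose proof (Rle_abs ((1 - G (eps - x)) / (1 - G (- x)))). lra. }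
  rewrite Rminus_0_r. rewrite Rabs_pos_eq; lra.
Qed.
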